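(* Let $k\ge4$ be even and let $(i,j\mid s,t)\in\mathcal{O}(\mathbb{C},k)$ be normalized, i.e. $0<i<j\le s<t\le k/2$. Then $j-i<t-s$, and consequently $j+s<i+t<k$.
   Context: $\phi=\exp(2\pi\mathrm{i}/k)$, $\mathbf{k}=\{1,\dots,k-1\}$, $\mathbf{k}_0=\{0,\dots,k-1\}$. A quadruple $(i,j\mid s,t)\in\mathbf{k}^4$ with $i\ne s$ is an overlap if $\phi^\omega(\phi^j-1)(\phi^s-1)=(\phi^i-1)(\phi^t-1)$ for some $\omega\in\mathbf{k}_0$; it is trivial if one of $i\equiv\pm j$, $j\equiv\pm t$, $t\equiv\pm s$, $s\equiv\pm i\pmod k$ holds, nontrivial otherwise. $\mathcal{O}(\mathbb{C},k)$ is the set of nontrivial overlaps. *)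

(* Defs.v *)
From mathcomp Require Import all_boot all_algebra.
From mathcomp Require Import all_classical all_reals all_analysis.
From mathcomp Require Import complex.
Set Implicit Arguments. Unset Strict Implicit. Unset Printing Implicit Defensive.
Import GRing.Theory Num.Theory.
Local Open Scope ring_scope.
Local Open Scope complex_scope.

(* phi = exp(2 pi i / k) = cos(2 pi / k) + i sin(2 pi / k). *)
Definition phi (R : realType) (k : nat) : R[i] :=
  cos (2 * pi / k%:R) +i* sin (2 * pi / k%:R).

Definition in_k (k x : nat) : bool := (0 < x)%N && (x < k)%N.

Definition is_overlap (R : realType) (k i j s t : nat) : Prop :=
  [/\ [&& in_k k i, in_k k j, in_k k s & in_k k t], i != s &
   (exists2 w : nat, (w < k)%N &
     phi R k ^+ w * (phi R k ^+ j - 1) * (phi R k ^+ s - 1)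
     = (phi R k ^+ i - 1) * (phi R k ^+ t - 1))].

Definition cong_pm (k a b : nat) : bool :=
  (a == b %[mod k]) || ((a + b) %% k == 0)%N.

Definition trivial_quad (k i j s t : nat) : bool :=
  [|| cong_pm k i j, cong_pm k j t, cong_pm k t s | cong_pm k s i].

Definition in_O (R : realType) (k i j s t : nat) : Prop :=
  is_overlap R k i j s t /\ ~~ trivial_quad k i j s t.

(* Main.v *)
Require Import Defs.
From mathcomp Require Import all_boot all_algebra.
From mathcomp Require Import all_classical all_reals all_analysis.
From mathcomp Require Import complex.
From mathcomp Require Import ring lra zify.
From Stdlib Require Import Lia.

Section S.
Import GRing.Theory Num.Theory.
Import order.Order.TTheory.
Local Open Scope ring_scope.
Local Open Scope complex_scope.
Variable R : realType.

Definition sqn (z : R[i]) : R := let: a +i* b := z in a ^+ 2 + b ^+ 2.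

Lemma sqnM (z w : R[i]) : sqn (z * w) = sqn z * sqn w.
Proof. case: z => a b; case: w => c d /=. ring. Qed.

Lemma cisM x y : (cos x +i* sin x) * (cos y +i* sin y) = cos (x + y) +i* sin (x + y) :> R[i].
Proof. rewrite cosD sinD /=. congr (_ +i* _); ring. Qed.

Lemma cisX x n : (cos x +i* sin x) ^+ n = cos (n%:R * x) +i* sin (n%:R * x) :> R[i].
Proof.
elim: n => [|n IH]. by rewrite (expr0 (cos x +i* sin x)) mul0r cos0 sin0.
by rewrite (exprS (cos x +i* sin x)) IH cisM mulrS mulrDl mul1r.
Qed.

Lemma sqn_cis1 x : sqn ((cos x +i* sin x) - 1) = 2 - 2 * cos x.
Proof. rewrite /=. rewrite ?oppr0 ?addr0 sin2cos2. ring. Qed.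

Lemma sqn_cis x : sqn (cos x +i* sin x) = 1.
Proof. exact: cos2Dsin2. Qed.

Lemma half_angle (y : R) : 2 - 2 * cos (y *+ 2) = 4 * sin y ^+ 2.
Proof. rewrite cos_mulr2n cos2sin2. rewrite mulr2n. ring. Qed.

Lemma key (k i j s t : nat) : (0 < k)%N ->
  (j <= s)%N -> (s + i < t + j)%N -> (t <= i + k)%N -> (i <= t)%N ->
  (i + t <= j + s)%N -> (j + s <= k)%N -> (s <= j + k)%N ->
  let b : R := pi / k%:R in
  (2 - 2 * cos ((j%:R * b) *+ 2)) * (2 - 2 * cos ((s%:R * b) *+ 2)) =
  (2 - 2 * cos ((i%:R * b) *+ 2)) * (2 - 2 * cos ((t%:R * b) *+ 2)) -> False.
Proof.
move=> k0 h1 h2 h3 h4 h5 h6 h7 b E.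
have bpos : 0 < b by rewrite divr_gt0 ?pi_gt0 // ltr0n.
have kb : k%:R * b = pi by rewrite /b mulrC -mulrA mulVf ?mulr1 // pnatr_eq0 -lt0n.
have Hle m n : (m <= n)%N -> m%:R * b <= n%:R * b.
  by move=> mn; rewrite ler_pM2r // ler_nat.
have Hlt m n : (m < n)%N -> m%:R * b < n%:R * b.
  by move=> mn; rewrite ltr_pM2r // ltr_nat.
have g1 := Hle _ _ h1. have g2 := Hlt _ _ h2. have g3 := Hle _ _ h3.
have g4 := Hle _ _ h4. have g5 := Hle _ _ h5. have g6 := Hle _ _ h6.
have g7 := Hle _ _ h7.
move: g1 g2 g3 g4 g5 g6 g7; rewrite !natrD !mulrDl kb.
set A := j%:R * b; set B := s%:R * b; set C := i%:R * b; set D := t%:R * b.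
have A0 : 0 <= A by rewrite mulr_ge0 // ltW.
have B0 : 0 <= B by rewrite mulr_ge0 // ltW.
have C0 : 0 <= C by rewrite mulr_ge0 // ltW.
have D0 : 0 <= D by rewrite mulr_ge0 // ltW.
move=> g1 g2 g3 g4 g5 g6 g7.
rewrite !half_angle in E.
have sA : 0 <= sin A by apply: sin_ge0_pi; apply/andP; split=> //; lra.
have sB : 0 <= sin B by apply: sin_ge0_pi; apply/andP; split=> //; lra.
have sC : 0 <= sin C by apply: sin_ge0_pi; apply/andP; split=> //; lra.
have sD : 0 <= sin D by apply: sin_ge0_pi; apply/andP; split=> //; lra.
have pi0 : 0 < pi :> R := pi_gt0 R. rewrite -/A -/B -/C -/D in E.
have c1 : cos (D - C) < cos (B - A).
  rewrite ltr_cos ?in_itv /=; first lra.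
    by apply/andP; split; lra.
  by apply/andP; split; lra.
have c2 : cos (A + B) <= cos (C + D).
  rewrite leNgt ltr_cos ?in_itv /=; first (rewrite -leNgt; lra).
    by apply/andP; split; lra.
  by apply/andP; split; lra.
have i1 : 2 * sin A * sin B = cos (B - A) - cos (A + B).
  by rewrite cosB cosD; ring.
have i2 : 2 * sin C * sin D = cos (D - C) - cos (C + D).
  by rewrite cosB cosD; ring.
have lt : sin C * sin D < sin A * sin B by lra.
have p0 : 0 <= sin C * sin D by exact: mulr_ge0.
nra.
Qed.

Lemma main_ineq (k i j s t : nat) : (0 < k)%N ->
  (j <= s)%N -> (s + i < t + j)%N -> (t <= i + k)%N -> (i <= t)%N ->
  (i + t <= j + s)%N -> (j + s <= k)%N -> (s <= j + k)%N ->
  is_overlap R k i j s t -> False.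
Proof.
move=> k0 h1 h2 h3 h4 h5 h6 h7 [_ _ [w _ Ew]].
have K := key k i j s t k0 h1 h2 h3 h4 h5 h6 h7; rewrite /= in K; apply: K.
have := congr1 sqn Ew; rewrite !sqnM /phi !cisX sqn_cis !sqn_cis1 mul1r.
have hang n : n%:R * (2 * pi / k%:R) = (n%:R * (pi / k%:R)) *+ 2 :> R.
  by rewrite mulr2n; ring.
by rewrite !hang.
Qed.
End S.

Theorem lemma23 (R : realType) (k i j s t : nat) :
  (4 <= k)%N -> ~~ odd k ->
  in_O R k i j s t ->
  [/\ (0 < i)%N, (i < j)%N, (j <= s)%N, (s < t)%N & (t <= k./2)%N] ->
  (j - i < t - s)%N /\ (j + s < i + t)%N /\ (i + t < k)%N.
Proof.
move=> k4 ko [ov _] [i0 ij js st tk].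
have kk : k = k./2 + k./2.
  by rewrite addnn -[k in LHS]odd_double_half (negbTE ko) add0n.
move: tk; set h := k./2 => tk.
have H : (j - i < t - s)%N.
  rewrite ltnNge; apply/negP => H.
  apply: (@main_ineq R k i j s t _ _ _ _ _ _ _ _ ov); lia.
split=> //; lia.
Qed.
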